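(* Let $k\ge1$ and assume that $R_0,\dots,R_k$ (from BCG) have full column rank. Run DR-BCG with the same $A,B,X_0$ (with any choice of the QR factorizations). Then DR-BCG is well defined up to index $k$ (all $S_{j}^TAS_{j}$, $j\le k-1$, are nonsingular), all $\widehat\Phi_j$ ($j\le k$) are nonsingular, and for $j=0,\dots,k$: $$\widehat X_j=X_j,\qquad R_j=Q_j\widehat\Phi_j,\qquad P_j=S_j\widehat\Phi_j,$$ and for $j=1,\dots,k$: $\Upsilon_{j-1}=\widehat\Phi_{j-1}^{-1}\widehat\Pi_{j-1}\widehat\Phi_{j-1}$ and $$\Theta_{j-1}=\widehat\Phi_{j-1}^T\,\widehat\Pi_{j-1}\,\widehat\Phi_{j-1}.$$
   Context: Let $A\in\mathbb{R}^{n\times n}$ be symmetric positive definite, let $B,X_0\in\mathbb{R}^{n\times m}$, and let $X=A^{-1}B$. The block conjugate gradient (BCG) algorithm sets $R_0=B-AX_0$, $P_0=R_0$, and for $k=1,2,\dots$: $\Upsilon_{k-1}=(P_{k-1}^TAP_{k-1})^{-1}(R_{k-1}^TR_{k-1})$, $X_k=X_{k-1}+P_{k-1}\Upsilon_{k-1}$, $R_k=R_{k-1}-AP_{k-1}\Upsilon_{k-1}$, $\Xi_k=(R_{k-1}^TR_{k-1})^{-1}(R_k^TR_k)$, $P_k=R_k+P_{k-1}\Xi_k$. Define $\mathfrak{E}_k=(X-X_k)^TA(X-X_k)$ and $\Theta_k=(R_k^TR_k)\Upsilon_k$. The Dubrulle-R BCG algorithm (DR-BCG) sets $\widehat X_0=X_0$,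 computes a QR factorization $B-AX_0=Q_0\widehat\Phi_0$ ($Q_0$ with orthonormal columns, $\widehat\Phi_0\in\mathbb{R}^{m\times m}$ upper triangular), $S_0=Q_0$, and for $k=1,2,\dots$: $\widehat\Pi_{k-1}=(S_{k-1}^TAS_{k-1})^{-1}$, $\widehat X_k=\widehat X_{k-1}+S_{k-1}\widehat\Pi_{k-1}\widehat\Phi_{k-1}$, a QR factorization $Q_{k-1}-AS_{k-1}\widehat\Pi_{k-1}=Q_k\widehat\Psi_k$, $S_k=Q_k+S_{k-1}\widehat\Psi_k^T$, and $\widehat\Phi_k=\widehat\Psi_k\widehat\Phi_{k-1}$. *)

(* Defs.v *)
From HB Require Import structures.
From mathcomp Require Import all_boot all_order all_algebra.
Set Implicit Arguments. Unset Strict Implicit. Unset Printing Implicit Defensive.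
Import Order.TTheory GRing.Theory Num.Theory.
Local Open Scope ring_scope.

Definition spd (R : realFieldType) (n : nat) (A : 'M[R]_n) : Prop :=
  A^T = A /\ forall x : 'cV[R]_n, x != 0 -> 0 < (x^T *m A *m x) 0 0.

Definition upper_tri (R : realFieldType) (m : nat) (T : 'M[R]_m) : Prop :=
  forall i j : 'I_m, (j < i)%N -> T i j = 0.

Definition orthonormal_cols (R : realFieldType) (n m : nat) (Q : 'M[R]_(n, m)) : Prop :=
  Q^T *m Q = 1%:M.

(* BCG iterates (X_k, R_k, P_k).  Inverses are taken with invmx (a total
   function); under the hypotheses of the theorem all inverted matrices are
   nonsingular. *)
Fixpoint bcg (R : realFieldType) (n m : nat) (A : 'M[R]_n) (B X0 : 'M[R]_(n, m))
    (k : nat) : 'M[R]_(n, m) * 'M[R]_(n, m) * 'M[R]_(n, m) :=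
  match k with
  | 0 => let R0 := B - A *m X0 in (X0, R0, R0)
  | k'.+1 =>
      let: (X, Rk, P) := bcg A B X0 k' in
      let Ups := invmx (P^T *m A *m P) *m (Rk^T *m Rk) in
      let X' := X + P *m Ups in
      let R' := Rk - A *m P *m Ups in
      let Xi := invmx (Rk^T *m Rk) *m (R'^T *m R') in
      (X', R', R' + P *m Xi)
  end.

Definition bcgX R n m A B X0 k := ((@bcg R n m A B X0 k).1).1.
Definition bcgR R n m A B X0 k := ((@bcg R n m A B X0 k).1).2.
Definition bcgP R n m A B X0 k := (@bcg R n m A B X0 k).2.

Definition bcgUps (R : realFieldType) n m (A : 'M[R]_n) (B X0 : 'M[R]_(n, m)) k : 'M[R]_m :=
  let P := bcgP A B X0 k in let Rk := bcgR A B X0 k in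
  invmx (P^T *m A *m P) *m (Rk^T *m Rk).

Definition bcgTheta (R : realFieldType) n m (A : 'M[R]_n) (B X0 : 'M[R]_(n, m)) k : 'M[R]_m :=
  let Rk := bcgR A B X0 k in (Rk^T *m Rk) *m bcgUps A B X0 k.

Definition drbcg_run (R : realFieldType) (n m : nat) (A : 'M[R]_n) (B X0 : 'M[R]_(n, m))
    (k : nat) (Xh Q S : nat -> 'M[R]_(n, m)) (Phi Psi Pi : nat -> 'M[R]_m) : Prop :=
  [/\ Xh 0 = X0,
      B - A *m X0 = Q 0 *m Phi 0 /\ orthonormal_cols (Q 0) /\ upper_tri (Phi 0),
      S 0 = Q 0 &
      forall j, (1 <= j <= k)%N ->
        [/\ Pi j.-1 = invmx ((S j.-1)^T *m A *m S j.-1),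
            Xh j = Xh j.-1 + S j.-1 *m Pi j.-1 *m Phi j.-1,
            Q j.-1 - A *m S j.-1 *m Pi j.-1 = Q j *m Psi j
              /\ orthonormal_cols (Q j) /\ upper_tri (Psi j),
            S j = Q j + S j.-1 *m (Psi j)^T &
            Phi j = Psi j *m Phi j.-1]].

(* Main.v *)
Require Import Defs.
From HB Require Import structures.
From mathcomp Require Import all_boot all_order all_algebra.
Import Order.TTheory GRing.Theory Num.Theory.
Local Open Scope ring_scope.

Lemma sumsq0 (R : realFieldType) p (v : 'rV[R]_p) : v *m v^T = 0 -> v = 0.
Proof.
move=> H; have : (v *m v^T) 0 0 = 0 by rewrite H mxE.
rewrite mxE => /eqP.
under eq_bigr => i _ do rewrite mxE.
rewrite psumr_eq0 => [/allP Hall|i _]; last by rewrite -expr2 sqr_ge0.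
apply/rowP => i; rewrite mxE.
have := Hall i; rewrite mem_index_enum /= mulf_eq0 orbb => /(_ isT) /eqP.
by [].
Qed.

Lemma free_of_inj (F : fieldType) p q (M : 'M[F]_(p, q)) :
  (forall u : 'rV_p, u *m M = 0 -> u = 0) -> row_free M.
Proof.
move=> H; rewrite -kermx_eq0; apply/eqP/row_matrixP => i.
by rewrite row0; apply: H; rewrite -row_mul mulmx_ker row0.
Qed.

Lemma unit_PAP (R : realFieldType) n m (A : 'M[R]_n) (P Rk : 'M[R]_(n,m)) :
  spd A -> \rank Rk = m -> P^T *m Rk = Rk^T *m Rk -> P^T *m A *m P \in unitmx.
Proof.
case=> _ Hpos HrR HPR; rewrite -row_free_unit; apply: free_of_inj => u Hu.
have HPu : P *m u^T = 0.
  apply/eqP; apply: contraT => Hx; have := Hpos _ Hx.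
  have -> : (P *m u^T)^T *m A *m (P *m u^T) = u *m (P^T *m A *m P) *m u^T.
    by rewrite trmx_mul trmxK !mulmxA.
  by rewrite Hu !mul0mx mxE ltxx.
have HuP : u *m P^T = 0 by rewrite -(trmxK (u *m P^T)) trmx_mul trmxK HPu trmx0.
have HuR : u *m Rk^T = 0.
  apply: sumsq0; rewrite trmx_mul trmxK !mulmxA -(mulmxA u Rk^T Rk) -HPR.
  by rewrite mulmxA HuP !mul0mx.
have Hf : row_free Rk^T by rewrite /row_free mxrank_tr HrR.
by apply/eqP; rewrite -(mulmx_free_eq0 _ Hf) HuR.
Qed.

Lemma unit_of_rank (R : realFieldType) n m (Q : 'M[R]_(n,m)) (Phi : 'M[R]_m) :
  \rank (Q *m Phi) = m -> Phi \in unitmx.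
Proof.
move=> H; rewrite -row_full_unit /row_full eqn_leq rank_leq_col /=.
by rewrite -{1}H mxrankM_maxr.
Qed.
Arguments unit_PAP {R n m A P Rk}.
Arguments unit_of_rank {R n m Q Phi}.

Lemma invmx_uniq (R : comUnitRingType) m (M N : 'M[R]_m) :
  M \in unitmx -> N *m M = 1%:M -> N = invmx M.
Proof.
move=> HM H; by rewrite -[N]mulmx1 -(mulmxV HM) mulmxA H mul1mx.
Qed.

Lemma bcg_step (R : realFieldType) n m (A : 'M[R]_n) (B X0 : 'M[R]_(n,m)) j :
  let Rj := bcgR A B X0 j in let Pj := bcgP A B X0 j in
  let R' := bcgR A B X0 j.+1 in
  [/\ bcgX A B X0 j.+1 = bcgX A B X0 j + Pj *m bcgUps A B X0 j,
      R' = Rj - A *m Pj *m bcgUps A B X0 j &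
      bcgP A B X0 j.+1 = R' + Pj *m (invmx (Rj^T *m Rj) *m (R'^T *m R'))].
Proof.
rewrite /bcgUps /bcgX /bcgR /bcgP /=.
by case: (bcg A B X0 j) => [[X Rk] P] /=.
Qed.
Arguments bcg_step {R n m} A B X0 j.

Lemma bcg0 (R : realFieldType) n m (A : 'M[R]_n) (B X0 : 'M[R]_(n,m)) :
  [/\ bcgX A B X0 0 = X0, bcgR A B X0 0 = B - A *m X0 & bcgP A B X0 0 = B - A *m X0].
Proof. by []. Qed.

Lemma bcg_orth (R : realFieldType) n m (A : 'M[R]_n) (B X0 : 'M[R]_(n,m)) k :
  spd A -> (forall j, (j <= k)%N -> \rank (bcgR A B X0 j) = m) ->
  forall j, (j <= k)%N ->
   (bcgP A B X0 j)^T *m bcgR A B X0 j = (bcgR A B X0 j)^T *m bcgR A B X0 j.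
Proof.
move=> HA Hr; elim=> [|j IH] Hj; first by [].
have Hu := unit_PAP HA (Hr j (ltnW Hj)) (IH (ltnW Hj)).
have [_ HR HP] := bcg_step A B X0 j.
set Pj := bcgP A B X0 j in HR HP Hu IH *; set Rj := bcgR A B X0 j in HR HP Hu IH *.
set R' := bcgR A B X0 j.+1 in HR HP *.
have H0 : Pj^T *m R' = 0.
  rewrite HR /bcgUps -/Pj -/Rj mulmxBr !mulmxA (mulmxV Hu) mul1mx.
  by rewrite (IH (ltnW Hj)) subrr.
rewrite HP linearD /= mulmxDl trmx_mul -mulmxA H0 mulmx0 addr0.

by [].
Qed.

Lemma pi_alg (R : realFieldType) n m (A : 'M[R]_n) (P S : 'M[R]_(n,m))
    (Phi Pi : 'M[R]_m) :
  P = S *m Phi -> Phi \in unitmx -> P^T *m A *m P \in unitmx ->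
  Pi = invmx (S^T *m A *m S) ->
  [/\ S = P *m invmx Phi, S^T *m A *m S \in unitmx &
      Pi = Phi *m invmx (P^T *m A *m P) *m Phi^T].
Proof.
move=> HP HPhi HM HPi.
have HS : S = P *m invmx Phi by rewrite HP mulmxK.
move: HM; set M := P^T *m A *m P => HM.
have HSAS : S^T *m A *m S = (invmx Phi)^T *m M *m invmx Phi.
  by rewrite HS trmx_mul !mulmxA.
clearbody M.
have HPhiT : Phi^T \in unitmx by rewrite unitmx_tr.
have HU : S^T *m A *m S \in unitmx.
  by rewrite HSAS !unitmx_mul unitmx_tr unitmx_inv HPhi HM.
split => //; rewrite HPi; symmetry; apply: invmx_uniq => //.
rewrite HSAS trmx_inv !mulmxA (mulmxK HPhiT) (mulmxKV HM).
by rewrite (mulmxV HPhi).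
Qed.
Arguments pi_alg {R n m A P S Phi Pi}.
Arguments bcg_orth {R n m A B X0 k}.

Lemma Qorth (R : realFieldType) (n m : nat) (A : 'M[R]_n)
    (B X0 : 'M[R]_(n, m)) (k : nat)
    (Xh Q S : nat -> 'M[R]_(n, m)) (Phi Psi Pi : nat -> 'M[R]_m) :
  drbcg_run A B X0 k Xh Q S Phi Psi Pi ->
  forall j, (j <= k)%N -> (Q j)^T *m Q j = 1%:M.
Proof.
case=> _ [_ [H0 _]] _ Hrun [|j] Hj; first exact: H0.
by have [_ _ [_ [HQ _]] _ _] := Hrun j.+1 Hj.
Qed.
Arguments Qorth {R n m A B X0 k Xh Q S Phi Psi Pi}.

Lemma corr (R : realFieldType) (n m : nat) (A : 'M[R]_n)
    (B X0 : 'M[R]_(n, m)) (k : nat)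
    (Xh Q S : nat -> 'M[R]_(n, m)) (Phi Psi Pi : nat -> 'M[R]_m) :
  spd A ->
  (forall j, (j <= k)%N -> \rank (bcgR A B X0 j) = m) ->
  drbcg_run A B X0 k Xh Q S Phi Psi Pi ->
  forall j, (j <= k)%N ->
  [/\ Xh j = bcgX A B X0 j, bcgR A B X0 j = Q j *m Phi j,
      bcgP A B X0 j = S j *m Phi j & Phi j \in unitmx].
Proof.
move=> HA Hr Hrun0; have HQ := Qorth Hrun0.
have Horth := bcg_orth HA Hr.
case: Hrun0 => HX0 [HQR0 _] HS0 Hrun.
elim=> [|j IH] Hj.
  have HR0 : bcgR A B X0 0 = Q 0 *m Phi 0 by [].
  split => //; first by rewrite /bcgP /= HS0.
  by apply: (unit_of_rank (Q:=Q 0)); rewrite -HR0 Hr.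
have [IHX IHR IHP IHu] := IH (ltnW Hj).
have [HPi HXh [HQR [_ _]] HSd HPhi] := Hrun j.+1 Hj.
rewrite /= in HPi HXh HQR HSd HPhi.
have HM := unit_PAP HA (Hr j (ltnW Hj)) (Horth j (ltnW Hj)).
have [HS _ HPi'] := pi_alg IHP IHu HM HPi.
have [HstX HstR HstP] := bcg_step A B X0 j.
have HRR : (bcgR A B X0 j)^T *m bcgR A B X0 j = (Phi j)^T *m Phi j.
  by rewrite IHR trmx_mul -mulmxA (mulmxA (Q j)^T) HQ ?mul1mx // ltnW.
have Hkey : S j *m Pi j *m Phi j = bcgP A B X0 j *m bcgUps A B X0 j.
  rewrite HS HPi' /bcgUps HRR !mulmxA (mulmxKV IHu).
  by [].
have HR' : bcgR A B X0 j.+1 = Q j.+1 *m Phi j.+1.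
  rewrite HstR HPhi mulmxA -HQR mulmxBl IHR; congr (_ - _).
  by rewrite -(mulmxA A) -Hkey !mulmxA.
have HPhiT : (Phi j)^T \in unitmx by rewrite unitmx_tr.
have Hinv : invmx ((Phi j)^T *m Phi j) = invmx (Phi j) *m invmx (Phi j)^T.
  symmetry; apply: invmx_uniq; first by rewrite unitmx_mul HPhiT IHu.
  by rewrite !mulmxA (mulmxKV HPhiT) (mulVmx IHu).
split => //.
- by rewrite HXh IHX Hkey HstX.
- rewrite HstP HR' HRR Hinv IHP HSd mulmxDl; congr (_ + _).
  rewrite (trmx_mul (Q j.+1)) -(mulmxA (Phi j.+1)^T) (mulmxA (Q j.+1)^T) HQ //.
  rewrite mul1mx HPhi trmx_mul !mulmxA (mulmxK IHu) (mulmxKV HPhiT).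
  by [].
- by apply: (unit_of_rank (Q:=Q j.+1)); rewrite -HR' Hr.
Qed.
Arguments corr {R n m A B X0 k Xh Q S Phi Psi Pi}.

Theorem mainTheorem14 (R : realFieldType) (n m : nat) (A : 'M[R]_n)
    (B X0 : 'M[R]_(n, m)) (k : nat)
    (Xh Q S : nat -> 'M[R]_(n, m)) (Phi Psi Pi : nat -> 'M[R]_m) :
  spd A -> (1 <= k)%N ->
  (forall j, (j <= k)%N -> \rank (bcgR A B X0 j) = m) ->
  drbcg_run A B X0 k Xh Q S Phi Psi Pi ->
  [/\ forall j, (j < k)%N -> (S j)^T *m A *m S j \in unitmx,
      forall j, (j <= k)%N -> Phi j \in unitmx,
      forall j, (j <= k)%N ->
        [/\ Xh j = bcgX A B X0 j,
            bcgR A B X0 j = Q j *m Phi j &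
            bcgP A B X0 j = S j *m Phi j] &
      forall j, (1 <= j <= k)%N ->
        bcgUps A B X0 j.-1 = invmx (Phi j.-1) *m Pi j.-1 *m Phi j.-1 /\
        bcgTheta A B X0 j.-1 = (Phi j.-1)^T *m Pi j.-1 *m Phi j.-1].
Proof.
move=> HA Hk Hr Hrun.
have Hc := corr HA Hr Hrun.
have HQ := Qorth Hrun.
have Horth := bcg_orth HA Hr.
have Hpi : forall j, (j < k)%N ->
    [/\ S j = bcgP A B X0 j *m invmx (Phi j), (S j)^T *m A *m S j \in unitmx &
      Pi j = Phi j *m invmx ((bcgP A B X0 j)^T *m A *m bcgP A B X0 j) *m (Phi j)^T].
  move=> j Hj; have [_ _ HP Hu] := Hc j (ltnW Hj).
  case: Hrun => _ _ _ Hrun'; have [HPi _ _ _ _] := Hrun' j.+1 Hj.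
  exact: pi_alg HP Hu (unit_PAP HA (Hr j (ltnW Hj)) (Horth j (ltnW Hj))) HPi.
split.
- by move=> j Hj; have [_ ? _] := Hpi j Hj.
- by move=> j Hj; have [_ _ _ ?] := Hc j Hj.
- by move=> j Hj; have [? ? ? _] := Hc j Hj.
case=> [|j] //= Hj.
have [_ HR _ Hu] := Hc j (ltnW Hj); have [_ _ HPi] := Hpi j Hj.
have HRR : (bcgR A B X0 j)^T *m bcgR A B X0 j = (Phi j)^T *m Phi j.
  by rewrite HR trmx_mul -mulmxA (mulmxA (Q j)^T) HQ ?mul1mx // ltnW.
have HU : bcgUps A B X0 j = invmx (Phi j) *m Pi j *m Phi j.
  by rewrite HPi /bcgUps HRR !mulmxA (mulVmx Hu) mul1mx.
split => //.
by rewrite /bcgTheta HU HRR !mulmxA (mulmxK Hu).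
Qed.
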